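(* Fix $N\ge1$ and let $\mathbf{F}$ be either $\mathbf{F}^{\rm Midpt}$ or $\mathbf{F}^{\rm Mass}$ (defined in the context). Given an initial condition $\mathbf{b}_0\in\mathbb{C}^N$, there exists $\Delta t_1>0$ such that for any fixed $\Delta t\le\Delta t_1$ the scheme $\mathbf{b}_{n+1}=\mathbf{b}_n+\Delta t\,\mathbf{F}(\mathbf{b}_n,\mathbf{b}_{n+1})$ can always be solved: for every $n\ge0$, the iterate $\mathbf{b}_{n+1}$ exists.
   Context: For $\mathbf{b}_n,\mathbf{b}_{n+1}\in\mathbb{C}^N$ with components $b_{j,n},b_{j,n+1}$, set $b_{0,m}=b_{N+1,m}=0$ for $m\in\{n,n+1\}$, and define $b_{j,n+1/2}=\tfrac12(b_{j,n}+b_{j,n+1})$, $|b|^2_{j,n+1/2}=\tfrac12(|b_{j,n}|^2+|b_{j,n+1}|^2)$. For $j=1,\dots,N$: $F^{\rm Midpt}_j=-i|b_{j,n+1/2}|^2b_{j,n+1/2}+2i\,\overline{b_{j,n+1/2}}(b_{j-1,n+1/2}^2+b_{j+1,n+1/2}^2)$ (implicit midpoint); $F^{\rm Mass}_j=-i|b|^2_{j,n+1/2}b_{j,n+1/2}+2i\,\overline{b_{j,n+1/2}}(b_{j+1,n+1/2}^2+b_{j-1,n+1/2}^2)$ (modified midpoint). Both are discretizations of the toy model system $-i\dot b_j=-|b_j|^2b_j+2b_{j-1}^2\bar b_j+2b_{j+1}^2\bar b_j$, $b_0=b_{N+1}=0$, and both exactly conserve the mass $\sum_j|b_{j,n}|^2$;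 they are the ''mass preserving schemes''. *)

(* Defs.v *)
From HB Require Import structures.
From mathcomp Require Import all_boot all_order all_algebra.
From mathcomp Require Import complex.
From mathcomp Require Import reals.
Set Implicit Arguments. Unset Strict Implicit. Unset Printing Implicit Defensive.
Import Order.TTheory GRing.Theory Num.Theory.
Local Open Scope ring_scope.

Inductive scheme := Midpt | Mass.

Section Defs.
Variable R : realType.
Notation C := (R[i]).

(* a vector of C^N, components indexed 1..N via 'I_N (index j-1) *)
Definition cvec (N : nat) := 'I_N -> C.

(* component j (1-based) with boundary convention b_0 = b_{N+1} = 0 *)
Definition comp (N : nat) (b : cvec N) (j : nat) : C :=
  if (0 < j)%N then
    (if @insub nat (fun k => (k < N)%N) 'I_N j.-1 is Some i then b i else 0)
  else 0.

Definition Fj (s : scheme) (N : nat) (bn bn1 : cvec N) (j : nat) : C :=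
  let h k := (comp bn k + comp bn1 k) / 2 in
  let sq := match s with
            | Midpt => `|h j| ^+ 2
            | Mass => (`|comp bn j| ^+ 2 + `|comp bn1 j| ^+ 2) / 2
            end in
  - 'i%C * sq * h j + 2 * 'i%C * ((h j)^*)%C * (h j.-1 ^+ 2 + h j.+1 ^+ 2).

Definition F (s : scheme) (N : nat) (bn bn1 : cvec N) : cvec N :=
  fun j => Fj s bn bn1 (j.+1).

Definition step (s : scheme) (N : nat) (dt : R) (bn bn1 : cvec N) : Prop :=
  forall j : 'I_N, bn1 j = bn j + (dt%:C)%C * F s bn bn1 j.

End Defs.

(* Main.v *)
Require Import Defs.
From HB Require Import structures.
From mathcomp Require Import all_boot all_order all_algebra.
From mathcomp Require Import complex.
From mathcomp Require Import reals.
Import Order.TTheory GRing.Theory Num.Theory.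
Local Open Scope ring_scope.
From mathcomp Require Import ring lra zify.
Require Import Defs.
Import Order.TTheory GRing.Theory Num.Theory.
Local Open Scope ring_scope.
Set Implicit Arguments. Unset Strict Implicit.
Section S.
Variable R : realType.
Definition q (k : nat) : R := (2^-1) ^+ k.
Lemma q_ge0 k : 0 <= q k. Proof. by rewrite /q exprn_ge0 // invr_ge0. Qed.
Lemma qS k : q k.+1 * 2 = q k.
Proof. by rewrite /q exprSr -mulrA mulVf ?mulr1 // pnatr_eq0. Qed.

Definition rlim (a : nat -> R) (e : R) : R :=
  sup (fun y => exists k, y = a k - 2 * e * q k).

Lemma real_lim (a : nat -> R) (e : R) :
  (forall k, `|a k.+1 - a k| <= e * q k) ->
  forall k, `|a k - rlim a e| <= 2 * e * q k.
Proof.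
move=> H.
have e0 : 0 <= e.
  by have := H 0%N; rewrite /q expr0 mulr1 => /(le_trans (normr_ge0 _)).
pose u k := a k - 2 * e * q k.
pose w k := a k + 2 * e * q k.
have uS k : u k <= u k.+1.
  have := H k; rewrite ler_norml => /andP[h1 h2].
  have := qS k; rewrite /u; nra.
have wS k : w k.+1 <= w k.
  have := H k; rewrite ler_norml => /andP[h1 h2].
  have := qS k; rewrite /w; nra.
have um k m : u k <= u (k + m)%N.
  elim: m => [|m IH]; first by rewrite addn0.
  by apply: le_trans IH _; rewrite addnS.
have wm k m : w (k + m)%N <= w k.
  elim: m => [|m IH]; first by rewrite addn0.
  by apply: le_trans _ IH; rewrite addnS.
have uw k m : u k <= w m.
  have uwn n : u n <= w n.
    rewrite /u /w; have := q_ge0 n; nra.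
  apply: (le_trans (um k (m - k)%N)).
  apply: (le_trans (uwn _)).
  case: (leqP k m) => hkm.
    by rewrite subnKC.
  have -> : (k + (m - k))%N = (m + (k - m))%N by lia.
  exact: wm.
pose E : classical_sets.set R := fun y => exists k, y = u k.
have hub : classical_sets.has_ubound E.
  exists (w 0%N) => y [k ->]; exact: uw.
move=> k; change (rlim a e) with (sup E).
have h1 : u k <= sup E by apply: ub_le_sup => //; exists k.
have h2 : sup E <= w k.
  apply: ge_sup; first by exists (u 0%N), 0%N.
  by move=> y [m ->]; exact: uw.
rewrite ler_norml; move: h1 h2; rewrite /u /w => h1 h2; apply/andP; split; lra.
Qed.

Lemma le_limit (a c K : R) :
  (forall k, a <= c + K * q k) -> a <= c.
Proof.
move=> H; rewrite leNgt; apply/negP => hac.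
have K0 : 0 <= K.
  rewrite leNgt; apply/negP => hK.
  have := H 0%N; rewrite /q expr0 mulr1.
  have := H 1%N. rewrite /q expr1. lra.
pose x := K / (a - c).
have x0 : 0 <= x by rewrite /x divr_ge0 // subr_ge0 ltW.
have := archi_boundP x0; set n := Num.Def.archi_bound x => hn.
have qn : q n * n%:R <= 1.
  rewrite /q; elim: (n) => [|m IH]; first by rewrite mulr0 ler01.
  rewrite exprS -mulrA.
  have -> : m.+1%:R = m%:R + 1 :> R by rewrite -natr1.
  have hq : 0 <= (2^-1) ^+ m :> R by rewrite exprn_ge0 // invr_ge0.
  have hle : (2^-1) ^+ m <= 1 :> R by rewrite exprn_ile1 // ?invr_ge0 // invf_le1 // ler1n.
  move: IH hq hle; set t := (2^-1) ^+ m; set mm := m%:R.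
  have h2 : (2^-1 : R) * 2 = 1 by rewrite mulVf // pnatr_eq0.
  nra.
have := H n.
have hac' : 0 < a - c by rewrite subr_gt0.
have : K < n%:R * (a - c) by rewrite -ltr_pdivrMr.
have := q_ge0 n.
nra.
Qed.
Local Notation C := (R[i]).
Local Open Scope complex_scope.
Definition nc (z : C) : R := complex.Re `|z|.
Lemma ncE z : `|z| = (nc z)%:C.
Proof. by rewrite /nc; apply/esym/RRe_real; exact: normr_real. Qed.
Lemma nc_ge0 z : 0 <= nc z.
Proof. by rewrite -ler0c -ncE. Qed.
Lemma ncD x y : nc (x + y) <= nc x + nc y.
Proof. by rewrite -lecR rmorphD /= -!ncE ler_normD. Qed.
Lemma ncM x y : nc (x * y) = nc x * nc y.
Proof. by apply: complexI; rewrite rmorphM /= -!ncE normrM. Qed.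
Lemma ncN x : nc (- x) = nc x.
Proof. by rewrite /nc normrN. Qed.
Lemma ncJ x : nc (x^*%C)%C = nc x.
Proof. by rewrite /nc norm_conjC. Qed.
Lemma ncR (a : R) : nc a%:C = `|a|.
Proof. by rewrite /nc normc_def /= expr0n /= addr0 sqrtr_sqr. Qed.
Lemma nc_i : nc 'i%C = 1.
Proof. by rewrite /nc normc_def /= expr0n /= expr1n add0r sqrtr1. Qed.
Lemma ncB x y : nc (x - y) <= nc x + nc y.
Proof. by rewrite -(ncN y) ncD. Qed.
Lemma nc_Re z : `|complex.Re z| <= nc z.
Proof.
case: z => a b; rewrite /nc normc_def /= -sqrtr_sqr.
by apply: ler_wsqrtr; rewrite lerDl sqr_ge0.
Qed.
Lemma nc_Im z : `|complex.Im z| <= nc z.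
Proof.
case: z => a b; rewrite /nc normc_def /= -sqrtr_sqr.
by apply: ler_wsqrtr; rewrite lerDr sqr_ge0.
Qed.
Lemma nc_split z : nc z <= `|complex.Re z| + `|complex.Im z|.
Proof.
rewrite {1}[z]complexE; apply: le_trans (ncD _ _) _.
by rewrite ncM nc_i mul1r !ncR.
Qed.
Lemma ReB (x y : C) : complex.Re (x - y) = complex.Re x - complex.Re y.
Proof. by case: x => a b; case: y => c d. Qed.
Lemma ImB (x y : C) : complex.Im (x - y) = complex.Im x - complex.Im y.
Proof. by case: x => a b; case: y => c d. Qed.

Definition clim (x : nat -> C) (e : R) : C :=
  (rlim (fun k => complex.Re (x k)) e +i* rlim (fun k => complex.Im (x k)) e)%C.

Lemma cplx_lim (x : nat -> C) (e : R) :
  (forall k, nc (x k.+1 - x k) <= e * q k) ->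
  forall k, nc (x k - clim x e) <= 4 * e * q k.
Proof.
move=> H.
have H1 := @real_lim (fun k => complex.Re (x k)) e
  (fun k => ltac:(rewrite /= -ReB; exact: le_trans (nc_Re _) (H k))).
have H2 := @real_lim (fun k => complex.Im (x k)) e
  (fun k => ltac:(rewrite /= -ImB; exact: le_trans (nc_Im _) (H k))).
move=> k; apply: le_trans (nc_split _) _.
set l1 := rlim _ e in H1. set l2 := rlim _ e in H2.
have h1 := H1 k; have h2 := H2 k.
have -> : complex.Re (x k - (l1 +i* l2)%C) = complex.Re (x k) - l1 by case: (x k).
have -> : complex.Im (x k - (l1 +i* l2)%C) = complex.Im (x k) - l2 by case: (x k).
lra.
Qed.

Lemma mul3_le (a b c a' b' c' : R) : 0 <= a -> 0 <= b -> 0 <= c ->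
  a <= a' -> b <= b' -> c <= c' -> a * b * c <= a' * b' * c'.
Proof.
move=> a0 b0 c0 aa bb cc; apply: ler_pM => //; first by rewrite mulr_ge0.
by apply: ler_pM.
Qed.

Lemma tri (u1 u2 u3 v1 v2 v3 : C) (r d : R) :
  nc u1 <= r -> nc u2 <= r -> nc u3 <= r ->
  nc v1 <= r -> nc v2 <= r -> nc v3 <= r ->
  nc (u1 - v1) <= d -> nc (u2 - v2) <= d -> nc (u3 - v3) <= d ->
  nc (u1 * u2 * u3 - v1 * v2 * v3) <= 3 * (r * r * d).
Proof.
move=> hu1 hu2 hu3 hv1 hv2 hv3 d1 d2 d3.
have -> : u1 * u2 * u3 - v1 * v2 * v3 =
   (u1 - v1) * u2 * u3 + (v1 * (u2 - v2) * u3 + v1 * v2 * (u3 - v3)) by ring.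
apply: le_trans (ncD _ _) _; apply: le_trans (lerD (lexx _) (ncD _ _)) _.
rewrite !ncM.
have e1 := @mul3_le _ _ _ _ _ _ (nc_ge0 _) (nc_ge0 _) (nc_ge0 _) d1 hu2 hu3.
have e2 := @mul3_le _ _ _ _ _ _ (nc_ge0 _) (nc_ge0 _) (nc_ge0 _) hv1 d2 hu3.
have e3 := @mul3_le _ _ _ _ _ _ (nc_ge0 _) (nc_ge0 _) (nc_ge0 _) hv1 hv2 d3.
lra.
Qed.

Lemma tri0 (u1 u2 u3 : C) (r : R) :
  nc u1 <= r -> nc u2 <= r -> nc u3 <= r -> nc (u1 * u2 * u3) <= r * r * r.
Proof. by move=> *; rewrite !ncM; apply: mul3_le => //; exact: nc_ge0. Qed.

Lemma normCK' (z : C) : `|z| ^+ 2 = z * z^*%C.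
Proof. exact: normCK. Qed.

Lemma comp_cases N k : (forall b : cvec R N, comp b k = 0) \/
  exists i : 'I_N, forall b : cvec R N, comp b k = b i.
Proof.
rewrite /comp; case: k => [|k] /=; first by left.
case: insubP => [i _ _|_]; [right; exists i | left] => //.
Qed.

Lemma comp_ord N (b : cvec R N) (i : 'I_N) : comp b i.+1 = b i.
Proof.
rewrite /comp /=; case: insubP => [i' _ /= hi|]; last by rewrite ltn_ord.
by congr b; apply: val_inj.
Qed.

Lemma comp0 N (b : cvec R N) : comp b 0 = 0. Proof. by []. Qed.
Lemma compN N (b : cvec R N) : comp b N.+1 = 0.
Proof. by rewrite /comp /=; case: insubP => [i|//]; rewrite ltnn. Qed.

Definition hh N (b x : cvec R N) k := (comp b k + comp x k) / 2.
Definition A1 s N (b x : cvec R N) j :=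
  match s with Midpt => hh b x j * (hh b x j)^*%C * hh b x j
             | Mass => comp b j * (comp b j)^*%C * hh b x j end.
Definition A2 s N (b x : cvec R N) j :=
  match s with Midpt => hh b x j * (hh b x j)^*%C * hh b x j
             | Mass => comp x j * (comp x j)^*%C * hh b x j end.
Definition A3 N (b x : cvec R N) j := (hh b x j)^*%C * hh b x j.-1 * hh b x j.-1.
Definition A4 N (b x : cvec R N) j := (hh b x j)^*%C * hh b x j.+1 * hh b x j.+1.

Lemma Fj_dec s N (b x : cvec R N) j :
  Fj s b x j = (- 'i%C / 2) * A1 s b x j + (- 'i%C / 2) * A2 s b x j
     + (2 * 'i%C) * A3 b x j + (2 * 'i%C) * A4 b x j.
Proof.
rewrite /Fj /A1 /A2 /A3 /A4 /hh; case: s => /=; rewrite !normCK'. all: field; by rewrite ?pnatr_eq0.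
Qed.

Definition good (r d : R) (u v : C) := [/\ nc u <= r, nc v <= r & nc (u - v) <= d].

Lemma goodJ r d u v : good r d u v -> good r d u^*%C v^*%C.
Proof. by case=> h1 h2 h3; split; rewrite -?rmorphB ncJ. Qed.

Lemma good_tri r d u1 u2 u3 v1 v2 v3 : good r d u1 v1 -> good r d u2 v2 ->
  good r d u3 v3 -> nc (u1 * u2 * u3 - v1 * v2 * v3) <= 3 * (r * r * d)
  /\ nc (u1 * u2 * u3) <= r * r * r.
Proof.
case=> ? ? ?; case=> ? ? ?; case=> ? ? ?; split; first exact: tri.
exact: tri0.
Qed.

Lemma nc_half : nc (2^-1) = 2^-1.
Proof.
apply: complexI; rewrite -ncE normfV normr_nat fmorphV /=.
by rewrite rmorph_nat.
Qed.
Lemma nc_two : nc 2 = 2.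
Proof. by apply: complexI; rewrite -ncE normr_nat rmorph_nat. Qed.

Lemma ncA1 : nc (- 'i%C / 2) = 2^-1.
Proof. by rewrite ncM ncN nc_i nc_half mul1r. Qed.
Lemma ncA3 : nc (2 * 'i%C) = 2.
Proof. by rewrite ncM nc_i nc_two mulr1. Qed.

Definition inball N r (x : cvec R N) := forall j, nc (x j) <= r.
Definition close N d (x y : cvec R N) := forall j, nc (x j - y j) <= d.

Lemma good_comp N r d (x y : cvec R N) k : 0 <= r -> 0 <= d ->
  inball r x -> inball r y -> close d x y -> good r d (comp x k) (comp y k).
Proof.
move=> r0 d0 hx hy hxy; case: (comp_cases N k) => [h|[i h]]; rewrite !h.
  by split; rewrite ?subr0 /nc normr0.
by split.
Qed.

Lemma good_hh N r d (b x y : cvec R N) k : 0 <= r -> 0 <= d ->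
  inball r b -> inball r x -> inball r y -> close d x y ->
  good r d (hh b x k) (hh b y k).
Proof.
move=> r0 d0 hb hx hy hxy.
have [b1 b2 b3] := good_comp k r0 d0 hb hb (fun j => ltac:(by rewrite subrr /nc normr0)).
have [x1 x2 x3] := good_comp k r0 d0 hx hy hxy.
rewrite /hh; split.
- rewrite ncM nc_half; have := ncD (comp b k) (comp x k); lra.
- rewrite ncM nc_half; have := ncD (comp b k) (comp y k); lra.
- rewrite -mulrBl ncM nc_half.
  have -> : comp b k + comp x k - (comp b k + comp y k) = comp x k - comp y k by ring.
  have := nc_ge0 (comp x k - comp y k); lra.
Qed.

Lemma F_lip s N r d (b x y : cvec R N) j : 0 <= r -> 0 <= d ->
  inball r b -> inball r x -> inball r y -> close d x y ->
  nc (Fj s b x j - Fj s b y j) <= 15 * (r * r * d) /\ nc (Fj s b x j) <= 5 * (r * r * r).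
Proof.
move=> r0 d0 hb hx hy hxy.
have gh k := good_hh k r0 d0 hb hx hy hxy.
have gb : good r d (comp b j) (comp b j).
  by apply: (good_comp j r0 d0 hb hb) => i; rewrite subrr /nc normr0.
have gx := good_comp j r0 d0 hx hy hxy.
have [a1 a1'] : nc (A1 s b x j - A1 s b y j) <= 3 * (r * r * d) /\ nc (A1 s b x j) <= r * r * r.
  by destruct s; apply: good_tri => //; apply: goodJ.
have [a2 a2'] : nc (A2 s b x j - A2 s b y j) <= 3 * (r * r * d) /\ nc (A2 s b x j) <= r * r * r.
  by destruct s; apply: good_tri => //; apply: goodJ.
have [a3 a3'] : nc (A3 b x j - A3 b y j) <= 3 * (r * r * d) /\ nc (A3 b x j) <= r * r * r.
  by apply: good_tri => //; apply: goodJ.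
have [a4 a4'] : nc (A4 b x j - A4 b y j) <= 3 * (r * r * d) /\ nc (A4 b x j) <= r * r * r.
  by apply: good_tri => //; apply: goodJ.
rewrite !Fj_dec; split.
  set c1 := - 'i%C / 2; set c3 := 2 * 'i%C.
  have -> : c1 * A1 s b x j + c1 * A2 s b x j + c3 * A3 b x j + c3 * A4 b x j -
    (c1 * A1 s b y j + c1 * A2 s b y j + c3 * A3 b y j + c3 * A4 b y j) =
    c1 * (A1 s b x j - A1 s b y j) + c1 * (A2 s b x j - A2 s b y j) +
    c3 * (A3 b x j - A3 b y j) + c3 * (A4 b x j - A4 b y j) by ring.
  apply: le_trans (ncD _ _) _; apply: le_trans (lerD (ncD _ _) (lexx _)) _.
  apply: le_trans (lerD (lerD (ncD _ _) (lexx _)) (lexx _)) _.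
  rewrite !ncM /c1 /c3 ncN nc_i nc_half nc_two; lra.
apply: le_trans (ncD _ _) _; apply: le_trans (lerD (ncD _ _) (lexx _)) _.
apply: le_trans (lerD (lerD (ncD _ _) (lexx _)) (lexx _)) _.
rewrite !(ncM (- 'i%C / 2)) !(ncM (2 * 'i%C)) ncA1 ncA3; lra.
Qed.

Lemma tele (a : nat -> C) n : \sum_(j < n) (a j - a j.+1) = a 0%N - a n.
Proof.
elim: n => [|n IH]; first by rewrite big_ord0 subrr.
by rewrite big_ord_recr /= IH; ring.
Qed.

Lemma cjD (x y : C) : (x + y)^*%C = x^*%C + y^*%C. Proof. exact: rmorphD. Qed.
Lemma cjB (x y : C) : (x - y)^*%C = x^*%C - y^*%C. Proof. exact: rmorphB. Qed.
Lemma cjM (x y : C) : (x * y)^*%C = x^*%C * y^*%C. Proof. exact: rmorphM. Qed.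
Lemma cjX (x : C) n : (x ^+ n)^*%C = x^*%C ^+ n. Proof. exact: rmorphXn. Qed.
Lemma cjR (a : R) : (a%:C)^*%C = a%:C. Proof. exact: conjc_real. Qed.

Lemma conj_i : ('i%C : C)^*%C = - 'i%C.
Proof. by simpc. Qed.
Lemma conj_half (z : C) : (z / 2)^*%C = z^*%C / 2.
Proof. by rewrite rmorphM fmorphV rmorph_nat. Qed.
Lemma conj_c1 : (- 'i%C / 2 : C)^*%C = 'i%C / 2.
Proof. rewrite conj_half; congr (_ / _); apply/eqP; rewrite eq_complex /=; apply/andP; split; apply/eqP; ring. Qed.
Lemma conj_c3 : (2 * 'i%C : C)^*%C = - (2 * 'i%C).
Proof. apply/eqP; rewrite eq_complex /=; apply/andP; split; apply/eqP; ring. Qed.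

Lemma pt_identity0 (c1 c3 p1 p2 g gm gp : C) :
  c1^*%C = - c1 -> c3^*%C = - c3 ->
  let F := c1 * (p1 * p1^*%C * g) + c1 * (p2 * p2^*%C * g)
           + c3 * (g^*%C * gm * gm) + c3 * (g^*%C * gp * gp) in
  g^*%C * F + g * F^*%C = c3 * (g^*%C ^+ 2 * (gm ^+ 2 + gp ^+ 2)
                       - g ^+ 2 * (gm^*%C ^+ 2 + gp^*%C ^+ 2)).
Proof.
move=> h1 h3 F; rewrite /F !cjD !cjM !conjcK h1 h3.
ring.
Qed.

Lemma pt_identity (p1 p2 g gm gp : C) :
  let F := (- 'i%C / 2) * (p1 * p1^*%C * g) + (- 'i%C / 2) * (p2 * p2^*%C * g)
           + (2 * 'i%C) * (g^*%C * gm * gm) + (2 * 'i%C) * (g^*%C * gp * gp) in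
  g^*%C * F + g * F^*%C = (2 * 'i%C) * (g^*%C ^+ 2 * (gm ^+ 2 + gp ^+ 2)
                       - g ^+ 2 * (gm^*%C ^+ 2 + gp^*%C ^+ 2)).
Proof.
apply: pt_identity0; last exact: conj_c3.
by rewrite conj_c1 mulNr opprK.
Qed.

Lemma mass_step s N dt (b x : cvec R N) : step s dt b x ->
  \sum_(j < N) `|x j| ^+ 2 = \sum_(j < N) `|b j| ^+ 2.
Proof.
move=> hs; apply/eqP; rewrite -subr_eq0 -sumrB.
pose g k := hh b x k.
pose a k := (g k.+1)^*%C ^+ 2 * g k ^+ 2.
pose a' k := g k.+1 ^+ 2 * (g k)^*%C ^+ 2.
have key (j : 'I_N) : `|x j| ^+ 2 - `|b j| ^+ 2 =
    dt%:C * (2 * 'i%C) * ((a j - a j.+1) - (a' j - a' j.+1)).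
  have hF := hs j.
  have hg : g j.+1 = (b j + x j) / 2 by rewrite /g /hh !comp_ord.
  have e1 : `|x j| ^+ 2 - `|b j| ^+ 2 =
      (g j.+1)^*%C * (x j - b j) + g j.+1 * (x j - b j)^*%C.
    rewrite !normCK' hg conj_half !cjB !cjD; field; by rewrite ?pnatr_eq0.
  rewrite e1 {1 2}hF addrAC subrr add0r (cjM dt%:C) cjR.
  change (F s b x j) with (Fj s b x j.+1).
  have -> : (g j.+1)^*%C * (dt%:C * Fj s b x j.+1) + g j.+1 * (dt%:C * (Fj s b x j.+1)^*%C)
     = dt%:C * ((g j.+1)^*%C * Fj s b x j.+1 + g j.+1 * (Fj s b x j.+1)^*%C) by ring.
  rewrite Fj_dec /A1 /A2 /A3 /A4 -/(g j.+1) -/(g j.+1.-1) -/(g j.+2) /=.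
  case: s {hs hF e1} => /=; rewrite (pt_identity _ _ (g j.+1) (g j) (g j.+2)) /a /a'; ring.
rewrite (eq_bigr _ (fun j _ => key j)) -mulr_sumr sumrB !tele.
have g0 : g 0%N = 0 by rewrite /g /hh !comp0 add0r mul0r.
have gN : g N.+1 = 0 by rewrite /g /hh !compN add0r mul0r.
by rewrite /a /a' g0 gN conjc0; apply/eqP; ring.
Qed.

Lemma ncBC (x y : C) : nc (x - y) = nc (y - x).
Proof. by rewrite -ncN opprB. Qed.

Lemma nc_le0 (z : C) : nc z <= 0 -> z = 0.
Proof.
move=> h; have h0 : nc z = 0 by apply/eqP; rewrite eq_le h nc_ge0.
by apply/eqP; rewrite -normr_eq0 ncE h0.
Qed.

Lemma solve s N (b : cvec R N) (r dt : R) : 1 <= r -> inball r b -> 0 < dt ->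
  dt * (240 * (r * r * r)) <= 1 -> exists y, step s dt b y.
Proof.
move=> r1 hb dt0 hdt.
have r0 : 0 <= r by lra.
pose rho := 2 * r.
have rho0 : 0 <= rho by rewrite /rho; lra.
pose T (x : cvec R N) : cvec R N := fun j => b j + dt%:C * F s b x j.
have ncdt : nc dt%:C = dt by rewrite ncR gtr0_norm.
have hbr : inball rho b by move=> j; have := hb j; rewrite /rho; lra.
have cl0 (x : cvec R N) : close 0 x x by move=> j; rewrite subrr /nc normr0.
have Fb (x : cvec R N) j : inball rho x -> nc (dt%:C * F s b x j) <= 2^-1.
  move=> hx; have [_ h] := F_lip s (j.+1) rho0 (lexx 0) hbr hx hx (cl0 x).
  rewrite ncM ncdt; rewrite /F; apply: le_trans (ler_wpM2l (ltW dt0) h) _.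
  rewrite /rho; nra.
have Tin x : inball rho x -> inball rho (T x).
  move=> hx j; rewrite /T; apply: le_trans (ncD _ _) _.
  have := Fb x j hx; have := hb j; rewrite /rho; lra.
have Tcl x y d : 0 <= d -> inball rho x -> inball rho y -> close d x y ->
    close (d / 2) (T x) (T y).
  move=> d0 hx hy hxy j; rewrite /T.
  have -> : b j + dt%:C * F s b x j - (b j + dt%:C * F s b y j) =
      dt%:C * (F s b x j - F s b y j) by ring.
  have [h _] := F_lip s (j.+1) rho0 d0 hbr hx hy hxy.
  rewrite ncM ncdt; apply: le_trans (ler_wpM2l (ltW dt0) h) _.
  have h1 : dt * (r * r) <= dt * (r * r * r).
    by apply: ler_wpM2l; [lra | rewrite -{1}[r * r]mulr1; apply: ler_wpM2l; nra].
  have h2 : 0 <= dt * (r * r) by apply: mulr_ge0; nra.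
  rewrite /rho; nra.
pose X k := iter k T b.
have Xin k : inball rho (X k) by elim: k => [|k IH] //=; exact: Tin.
have Xcl k : close (r * q k) (X k.+1) (X k).
  elim: k => [|k IH].
    move=> j; rewrite /X /= /T; have -> : b j + dt%:C * F s b b j - b j = dt%:C * F s b b j by ring.
    have := Fb b j hbr; rewrite /q expr0 mulr1; lra.
  have := Tcl _ _ _ (mulr_ge0 r0 (q_ge0 k)) (Xin k.+1) (Xin k) IH.
  by rewrite -(qS k) mulrA mulfK // pnatr_eq0.
pose y : cvec R N := fun j => clim (fun k => X k j) r.
have Xy k : close (4 * r * q k) (X k) y.
  by move=> j; apply: (cplx_lim (x := fun k => X k j)) => m; exact: Xcl.
have yin : inball rho y.
  move=> j; apply: (@le_limit _ _ (4 * r)) => k.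
  have := ncD (X k j) (y j - X k j); rewrite addrC subrK.
  have := Xin k j; have := Xy k j; rewrite ncBC; lra.
exists y => j.
apply/eqP; rewrite -subr_eq0; apply/eqP/nc_le0.
apply: (@le_limit _ _ (4 * r)) => k.
have := Tcl _ _ _ (mulr_ge0 (mulr_ge0 (ler0n _ 4) r0) (q_ge0 k)) (Xin k) yin (Xy k) j.
have := Xy k.+1 j.
have e : y j - (b j + dt%:C * F s b y j) = (y j - X k.+1 j) + (T (X k) j - T y j).
  by change (X k.+1 j) with (T (X k) j); rewrite /T; ring.
rewrite e; have := ncD (y j - X k.+1 j) (T (X k) j - T y j).
rewrite ncBC -(qS k) => h1 h2 h3.
have := q_ge0 k.+1; nra.
Qed.

Lemma ncsq (z : C) : (nc z ^+ 2)%:C = `|z| ^+ 2.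
Proof. by rewrite ncE rmorphXn. Qed.

Lemma mass_R s N dt (b x : cvec R N) : step s dt b x ->
  \sum_(j < N) nc (x j) ^+ 2 = \sum_(j < N) nc (b j) ^+ 2.
Proof.
move=> /mass_step h; apply: complexI; rewrite !rmorph_sum /=.
rewrite (eq_bigr (fun j => `|x j| ^+ 2)); last by move=> j _; exact: ncsq.
by rewrite [RHS](eq_bigr (fun j => `|b j| ^+ 2)) //; move=> j _; exact: ncsq.
Qed.

Lemma bound_of_mass N (b : cvec R N) (M : R) :
  \sum_(j < N) nc (b j) ^+ 2 = M -> inball (1 + M) b.
Proof.
move=> hM j.
have hj : nc (b j) ^+ 2 <= M.
  rewrite -hM (bigD1 j) //= lerDl; apply: sumr_ge0 => i _; exact: sqr_ge0.
have M0 : 0 <= M by apply: le_trans hj; exact: sqr_ge0.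
have := nc_ge0 (b j); move: hj; rewrite expr2; nra.
Qed.
End S.
Unset Implicit Arguments.

Theorem corollary3p2 (R : realType) (s : scheme) (N : nat) (hN : (1 <= N)%N)
    (b0 : cvec R N) :
  exists dt1 : R, 0 < dt1 /\
    forall dt : R, 0 < dt -> dt <= dt1 ->
      forall (n : nat) (b : nat -> cvec R N),
        b 0%N = b0 ->
        (forall k : nat, (k < n)%N -> step s dt (b k) (b k.+1)) ->
        exists bn1 : cvec R N, step s dt (b n) bn1.
Proof.
pose M := \sum_(j < N) nc (b0 j) ^+ 2.
have M0 : 0 <= M by apply: sumr_ge0 => i _; exact: sqr_ge0.
pose r := 1 + M.
have r1 : 1 <= r by rewrite /r; lra.
have r3 : 0 < 240 * (r * r * r) by apply: mulr_gt0 => //; nra.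
exists (240 * (r * r * r))^-1; split; first by rewrite invr_gt0.
move=> dt dt0 hdt n b hb0 hsteps.
have hm k : (k <= n)%N -> \sum_(j < N) nc (b k j) ^+ 2 = M.
  elim: k => [|k IH] hk; first by rewrite hb0.
  rewrite (mass_R (hsteps k hk)); apply: IH; exact: ltnW.
apply: (solve s r1 (bound_of_mass (hm n (leqnn n))) dt0).
by rewrite -ler_pdivlMr // mul1r.
Qed.
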